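(* For every $x \in \mathbb{R}$ and $k \in \mathbb{Z}$, we have \[ \mathfrak{a}(x) = \mathfrak{a}(x+1), \qquad \mathfrak{b}_k(x) = \mathfrak{b}_k(x+1). \] If additionally $\alpha_k = \alpha_{-k}$ for every $k \in \mathbb{Z}$, then we also have \[ \mathfrak{a}(x) = \mathfrak{a}(0), \qquad \|\mathfrak{b}(x)\|_{\ell^2(\mathbb{Z})} = \|\mathfrak{b}(0)\|_{\ell^2(\mathbb{Z})}. \]
   Context: Setting: $\mathcal X=H^{s,p}(\mathbb{R};\mathbb{R}^n)$, $p\in[2,\infty)$, $s>1/p$. PDE $\mathrm{d}u=Au\,\mathrm{d}t+f(u)\,\mathrm{d}t$ with $A$ generating a translation-commuting $C_0$-semigroup, $f$ smooth as a Nemytskii map on $\mathcal X$; stable traveling pulse $u^*(x-ct)$. $\mathcal T_xf=f(\cdot-x)$. The isochron map $\pi_{\mathrm{iso}}$ (upright $\pi$ in the paper, not the circle constant) is defined near $\{\mathcal T_xu^*\}$ by $\lim_{t\to\infty}\|u^v(t)-u^*(\cdot-ct-\pi_{\mathrm{iso}}(v))\|_{\mathcal X}=0$; it satisfies $\pi_{\mathrm{iso}}(\mathcal T_xu)=x+\pi_{\mathrm{iso}}(u)$, hence $\pi_{\mathrm{iso}}'(\mathcal T_xu)[v]=\pi_{\mathrm{iso}}'(u)[\mathcal T_{-x}v]$ and $\pi_{\mathrm{iso}}''(\mathcal T_xu)[v,w]=\pi_{\mathrm{iso}}''(u)[\mathcal T_{-x}v,\mathcal T_{-x}w]$, and $\pi_{\mathrm{iso}}'(u^*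 )[v]=\langle\psi,v\rangle$ where $\psi$ is the bounded functional with $\Pi^cf=-\langle\psi,f\rangle\partial_xu^*$ ($\Pi^c$ the spectral projection of $\mathcal L=A+c\partial_x+f'(u^* )$ onto $\mathrm{span}\{\partial_xu^*\}$). Noise basis $e_k(x)=\sqrt2\cos(2\pi kx)$ ($k>0$), $e_0=1$, $e_k(x)=\sqrt2\sin(2\pi kx)$ ($k<0$), coefficients $\alpha_k$, nonlinearity $g$. Define $\mathfrak a(x)=\tfrac12\sum_k\alpha_k^2\big(\pi_{\mathrm{iso}}'(\mathcal T_xu^* )[g'(\mathcal T_xu^* )g(\mathcal T_xu^* )e_k^2]+\pi_{\mathrm{iso}}''(\mathcal T_xu^* )[g(\mathcal T_xu^* )e_k,g(\mathcal T_xu^* )e_k]\big)$, $\mathfrak b_k(x)=\alpha_k\pi_{\mathrm{iso}}'(\mathcal T_xu^* )[g(\mathcal T_xu^* )e_k]$, and $\mathfrak b(x)=(\mathfrak b_k(x))_{k\in\mathbb{Z}}$. *)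

(* Defs.v *)
From HB Require Import structures.
From mathcomp Require Import all_boot all_order all_algebra.
From mathcomp Require Import all_classical all_reals all_analysis.
Set Implicit Arguments. Unset Strict Implicit. Unset Printing Implicit Defensive.
Import Order.TTheory GRing.Theory Num.Theory.
Import numFieldNormedType.Exports.
Local Open Scope ring_scope.

Section Defs.
Variables (R : realType) (n : nat).
Local Notation V := 'rV[R]_n.
Local Notation Fn := (R -> V).

Definition transl (x : R) (f : Fn) : Fn := fun y => f (y - x).

Definition ebasis (k : int) (y : R) : R :=
  if (0 < k)%R then Num.sqrt 2 * cos (2 * pi * k%:~R * y)
  else if k == 0 then 1
  else Num.sqrt 2 * sin (2 * pi * k%:~R * y).

Definition symsum (F : int -> R) (N : nat) : R :=
  F 0 + \sum_(1 <= k < N.+1) (F k%:Z + F (- k%:Z)).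

Definition zsum (F : int -> R) : R := limn (symsum F).

(* l^2(Z) norm, in the extended reals (+oo if not square summable) *)
Definition l2norm (b : int -> R) : \bar R :=
  limn (fun N => (Num.sqrt (symsum (fun k => b k ^+ 2) N))%:E).

(* frak a(x); Dpi u v = pi_iso'(u)[v], Dpi2 u v w = pi_iso''(u)[v,w],
   g'(u)g(u) taken pointwise via the differential 'd g. *)
Definition frak_a (ustar : Fn) (g : V -> V) (alpha : int -> R)
  (Dpi : Fn -> Fn -> R) (Dpi2 : Fn -> Fn -> Fn -> R) (x : R) : R :=
  2^-1 * zsum (fun k => alpha k ^+ 2 *
    (Dpi (transl x ustar)
        (fun y => (ebasis k y) ^+ 2 *:
           ('d g (transl x ustar y) (g (transl x ustar y))))
     + Dpi2 (transl x ustar)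
        (fun y => ebasis k y *: g (transl x ustar y))
        (fun y => ebasis k y *: g (transl x ustar y)))).

Definition frak_b (ustar : Fn) (g : V -> V) (alpha : int -> R)
  (Dpi : Fn -> Fn -> R) (k : int) (x : R) : R :=
  alpha k * Dpi (transl x ustar) (fun y => ebasis k y *: g (transl x ustar y)).

Definition lin_subspace (inX : Fn -> Prop) : Prop :=
  inX (fun _ => 0) /\
  forall (a : R) v w, inX v -> inX w -> inX (fun y => a *: v y + w y).

Definition isochron_derivs (inX : Fn -> Prop) (ustar : Fn)
  (Dpi : Fn -> Fn -> R) (Dpi2 : Fn -> Fn -> Fn -> R) : Prop :=
  [/\ forall x (a : R) v w, inX v -> inX w ->
        Dpi (transl x ustar) (fun y => a *: v y + w y)
        = a * Dpi (transl x ustar) v + Dpi (transl x ustar) w,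
      forall x (a : R) v w z, inX v -> inX w -> inX z ->
        Dpi2 (transl x ustar) (fun y => a *: v y + w y) z
        = a * Dpi2 (transl x ustar) v z + Dpi2 (transl x ustar) w z,
      forall x (a : R) v w z, inX v -> inX w -> inX z ->
        Dpi2 (transl x ustar) z (fun y => a *: v y + w y)
        = a * Dpi2 (transl x ustar) z v + Dpi2 (transl x ustar) z w,
      forall x v, inX v ->
        Dpi (transl x ustar) v = Dpi ustar (transl (- x) v)
    & forall x v w, inX v -> inX w ->
        Dpi2 (transl x ustar) v w
        = Dpi2 ustar (transl (- x) v) (transl (- x) w)].

End Defs.

(* Main.v *)
Require Import Defs.
From HB Require Import structures.
From mathcomp Require Import all_boot all_order all_algebra.
From mathcomp Require Import all_classical all_reals all_analysis.
From mathcomp Require Import ring lra.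
Import Order.TTheory GRing.Theory Num.Theory.
Import numFieldNormedType.Exports.
Local Open Scope ring_scope.

Set Implicit Arguments. Unset Strict Implicit.
Section Aux.
Variables (R : realType) (n : nat).
Local Notation V := 'rV[R]_n.

Lemma cosInt (k : int) (a : R) : cos (a + 2 * pi * k%:~R) = cos a.
Proof.
case: k => m.
  rewrite [2 * pi]mulr_natl mulr_natr.
  by apply: periodicn; exact: cosD2pi.
rewrite NegzE mulrNz mulrN [2 * pi]mulr_natl mulr_natr.
by rewrite -[in RHS](subrK (pi *+ 2 *+ m.+1) a) (periodicn (@cosD2pi R)).
Qed.
Lemma sinInt (k : int) (a : R) : sin (a + 2 * pi * k%:~R) = sin a.
Proof.
case: k => m.
  rewrite [2 * pi]mulr_natl mulr_natr.
  by apply: periodicn; exact: sinD2pi.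
rewrite NegzE mulrNz mulrN [2 * pi]mulr_natl mulr_natr.
by rewrite -[in RHS](subrK (pi *+ 2 *+ m.+1) a) (periodicn (@sinD2pi R)).
Qed.

Lemma transl0 (f : R -> V) : transl 0 f = f.
Proof. by apply: boolp.funext => y; rewrite /transl subr0. Qed.

Lemma transl_shift (x : R) (u : R -> V) (c : R -> R) (h : V -> V) :
  transl (- x) (fun y => c y *: h (transl x u y)) = fun y => c (y + x) *: h (u y).
Proof. by apply: boolp.funext => y; rewrite /transl opprK addrK. Qed.

Lemma ebasis0 (y : R) : ebasis 0 y = 1.
Proof. by rewrite /ebasis ltxx eqxx. Qed.
Lemma ebasis1 (k : int) (y : R) : ebasis k (y + 1) = ebasis k y.
Proof. by rewrite /ebasis mulrDr mulr1 cosInt sinInt. Qed.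
Lemma ebasisP (m : nat) (y : R) :
  ebasis (m.+1)%:Z y = Num.sqrt 2 * cos (2 * pi * (m.+1)%:R * y).
Proof. by rewrite /ebasis. Qed.
Lemma ebasisN (m : nat) (y : R) :
  ebasis (- (m.+1)%:Z) y = - (Num.sqrt 2 * sin (2 * pi * (m.+1)%:R * y)).
Proof.
rewrite /ebasis.
have -> : (0 < - (m.+1)%:Z) = false by [].
have -> : (- (m.+1)%:Z == 0) = false by [].
by rewrite mulrNz mulrN mulNr sinN mulrN.
Qed.
Lemma ebasis_rot (m : nat) (x y : R) :
  ebasis (m.+1)%:Z (y + x) = cos (2 * pi * (m.+1)%:R * x) * ebasis (m.+1)%:Z y
     + sin (2 * pi * (m.+1)%:R * x) * ebasis (- (m.+1)%:Z) y /\
  ebasis (- (m.+1)%:Z) (y + x) = cos (2 * pi * (m.+1)%:R * x) * ebasis (- (m.+1)%:Z) y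
     + (- sin (2 * pi * (m.+1)%:R * x)) * ebasis (m.+1)%:Z y.
Proof. rewrite !ebasisP !ebasisN mulrDr cosD sinD; split; ring. Qed.
Lemma ebasis_sq (m : nat) (y : R) :
  ebasis (m.+1)%:Z y ^+ 2 + ebasis (- (m.+1)%:Z) y ^+ 2 = 2.
Proof.
rewrite ebasisP ebasisN sqrrN !exprMn sqr_sqrtr ?ler0n //.
by rewrite -mulrDr cos2Dsin2 mulr1.
Qed.
Lemma lin_helpers (inX : (R -> V) -> Prop) (P : (R -> V) -> R) :
  inX (fun _ => 0) ->
  (forall a v w, inX v -> inX w -> P (fun y => a *: v y + w y) = a * P v + P w) ->
  (forall v w, inX v -> inX w -> P (fun y => v y + w y) = P v + P w) /\
  (forall s v, inX v -> P (fun y => s *: v y) = s * P v).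
Proof.
move=> H0 HL.
have P0 : P (fun _ => 0) = 0.
  have : P (fun _ => 0) = 1 * P (fun _ => 0) + P (fun _ => 0).
    rewrite -HL //; congr P; apply: boolp.funext => y /=.
    by rewrite scale1r addr0.
  lra.
split.
  move=> v w hv hw; rewrite -[P v]mul1r -HL //; congr P.
  by apply: boolp.funext => y /=; rewrite scale1r.
move=> s v hv; rewrite -[s * P v]addr0 -P0 -HL //; congr P.
by apply: boolp.funext => y /=; rewrite addr0.
Qed.

Lemma quad_expand (inX : (R -> V) -> Prop) (Q : (R -> V) -> (R -> V) -> R) :
  inX (fun _ => 0) ->
  (forall (a : R) v w, inX v -> inX w -> inX (fun y => a *: v y + w y)) ->
  (forall a v w z, inX v -> inX w -> inX z ->
     Q (fun y => a *: v y + w y) z = a * Q v z + Q w z) ->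
  (forall a v w z, inX v -> inX w -> inX z ->
     Q z (fun y => a *: v y + w y) = a * Q z v + Q z w) ->
  forall a b (c s : R), inX a -> inX b ->
  Q (fun y => c *: a y + s *: b y) (fun y => c *: a y + s *: b y)
  = c ^+ 2 * Q a a + c * s * (Q a b + Q b a) + s ^+ 2 * Q b b.
Proof.
move=> H0 Hlin Ll Lr a b c s ha hb.
have scX : forall t v, inX v -> inX (fun y => t *: v y).
  move=> t v hv; have -> : (fun y => t *: v y) = (fun y => t *: v y + (fun _ => 0) y).
    by apply: boolp.funext => y /=; rewrite addr0.
  exact: Hlin.
have addX : forall v w, inX v -> inX w -> inX (fun y => v y + w y).
  move=> v w hv hw; have -> : (fun y => v y + w y) = (fun y => 1 *: v y + w y).
    by apply: boolp.funext => y /=; rewrite scale1r.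
  exact: Hlin.
have hL : forall z, inX z -> 
  (forall v w, inX v -> inX w -> Q (fun y => v y + w y) z = Q v z + Q w z) /\
  (forall s v, inX v -> Q (fun y => s *: v y) z = s * Q v z).
  move=> z hz; apply: (@lin_helpers inX (fun v => Q v z)) => //.
  by move=> ? ? ? ? ?; apply: Ll.
have hR : forall z, inX z -> 
  (forall v w, inX v -> inX w -> Q z (fun y => v y + w y) = Q z v + Q z w) /\
  (forall s v, inX v -> Q z (fun y => s *: v y) = s * Q z v).
  move=> z hz; apply: (@lin_helpers inX (fun v => Q z v)) => //.
  by move=> ? ? ? ? ?; apply: Lr.
have hca := scX c a ha; have hsb := scX s b hb.
have hz := addX _ _ hca hsb.
rewrite (proj1 (hL _ hz)) // (proj2 (hL _ hz)) // (proj2 (hL _ hz)) //.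
rewrite (proj1 (hR _ ha)) // (proj1 (hR _ hb)) //.
rewrite (proj2 (hR _ ha)) // (proj2 (hR _ ha)) // (proj2 (hR _ hb)) // (proj2 (hR _ hb)) //.
ring.
Qed.
End Aux.


Theorem proposition4p4 (R : realType) (n : nat)
  (inX : (R -> 'rV[R]_n) -> Prop) (ustar : R -> 'rV[R]_n)
  (g : 'rV[R]_n -> 'rV[R]_n) (alpha : int -> R)
  (Dpi : (R -> 'rV[R]_n) -> (R -> 'rV[R]_n) -> R)
  (Dpi2 : (R -> 'rV[R]_n) -> (R -> 'rV[R]_n) -> (R -> 'rV[R]_n) -> R)
  (HX : lin_subspace inX)
  (Hpi : isochron_derivs inX ustar Dpi Dpi2)
  (Hg : forall (x : R) (k : int),
     inX (fun y => ebasis k y *: g (transl x ustar y)))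
  (Hgg : forall (x : R) (k : int),
     inX (fun y => (ebasis k y) ^+ 2 *:
            ('d g (transl x ustar y) (g (transl x ustar y))))) :
  (forall (x : R) (k : int),
     frak_a ustar g alpha Dpi Dpi2 x = frak_a ustar g alpha Dpi Dpi2 (x + 1) /\
     frak_b ustar g alpha Dpi k x = frak_b ustar g alpha Dpi k (x + 1)) /\
  ((forall k : int, alpha k = alpha (- k)) ->
   forall x : R,
     frak_a ustar g alpha Dpi Dpi2 x = frak_a ustar g alpha Dpi Dpi2 0 /\
     l2norm (fun k => frak_b ustar g alpha Dpi k x)
     = l2norm (fun k => frak_b ustar g alpha Dpi k 0)).
Proof.
case: (HX) => H0 Hlin.
case: Hpi => L1 L2 L3 E1 E2.
have SA : forall x k,
  Dpi (transl x ustar) (fun y => (ebasis k y) ^+ 2 *: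
            ('d g (transl x ustar y) (g (transl x ustar y))))
  = Dpi ustar (fun y => (ebasis k (y + x)) ^+ 2 *: ('d g (ustar y) (g (ustar y)))).
  move=> x k; rewrite E1 //.
  by rewrite (transl_shift x ustar (fun y => ebasis k y ^+ 2) (fun v => 'd g v (g v))).
have SB : forall x k,
  Dpi (transl x ustar) (fun y => ebasis k y *: g (transl x ustar y))
  = Dpi ustar (fun y => ebasis k (y + x) *: g (ustar y)).
  move=> x k; rewrite E1 //.
  by rewrite (transl_shift x ustar (fun y => ebasis k y) g).
have SQ : forall x k,
  Dpi2 (transl x ustar) (fun y => ebasis k y *: g (transl x ustar y))
    (fun y => ebasis k y *: g (transl x ustar y))
  = Dpi2 ustar (fun y => ebasis k (y + x) *: g (ustar y))
      (fun y => ebasis k (y + x) *: g (ustar y)).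
  move=> x k; rewrite E2 //.
  by rewrite (transl_shift x ustar (fun y => ebasis k y) g).
split.
  move=> x k; split.
    rewrite /frak_a; congr (_ * zsum _); apply: boolp.funext => k'.
    rewrite !SA !SQ.
    by congr (_ * (Dpi ustar _ + Dpi2 ustar _ _)); apply: boolp.funext => y;
      rewrite addrA ebasis1.
  rewrite /frak_b !SB.
  by congr (_ * Dpi ustar _); apply: boolp.funext => y; rewrite addrA ebasis1.
move=> Hal x.
have L1' := L1 0; have L2' := L2 0; have L3' := L3 0.
rewrite transl0 in L1' L2' L3'.
have Hg0 : forall k, inX (fun y => ebasis k y *: g (ustar y)).
  by move=> k; have := Hg 0 k; rewrite transl0.
have scX : forall t v, inX v -> inX (fun y => t *: v y).
  move=> t v hv; have -> : (fun y => t *: v y) = (fun y => t *: v y + (fun _ => 0) y).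
    by apply: boolp.funext => y /=; rewrite addr0.
  exact: Hlin.
have [Padd Pscl] := lin_helpers H0 L1'.
have Plin : forall a b c s, inX a -> inX b ->
    Dpi ustar (fun y => c *: a y + s *: b y) = c * Dpi ustar a + s * Dpi ustar b.
  move=> a b c s ha hb.
  rewrite (L1' c a (fun y => s *: b y)) ?Pscl //; exact: scX.
pose cc (m : nat) := cos (2 * pi * (m.+1)%:R * x).
pose ss (m : nat) := sin (2 * pi * (m.+1)%:R * x).
have ek : forall m : nat,
  (fun y => ebasis (m.+1)%:Z (y + x) *: g (ustar y))
  = (fun y => cc m *: (ebasis (m.+1)%:Z y *: g (ustar y))
              + ss m *: (ebasis (- (m.+1)%:Z) y *: g (ustar y))).
  move=> m; apply: boolp.funext => y.
  by rewrite (ebasis_rot m x y).1 scalerDl !scalerA.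
have ekN : forall m : nat,
  (fun y => ebasis (- (m.+1)%:Z) (y + x) *: g (ustar y))
  = (fun y => cc m *: (ebasis (- (m.+1)%:Z) y *: g (ustar y))
              + (- ss m) *: (ebasis (m.+1)%:Z y *: g (ustar y))).
  move=> m; apply: boolp.funext => y.
  by rewrite (ebasis_rot m x y).2 scalerDl !scalerA.
  have e1 : forall z, (fun y => ebasis 0 (y + z) ^+ 2 *: 'd g (ustar y) (g (ustar y)))
     = (fun y => 1 ^+ 2 *: 'd g (ustar y) (g (ustar y))).
    by move=> z; apply: boolp.funext => y; rewrite ebasis0.
  have e2 : forall z, (fun y => ebasis 0 (y + z) *: g (ustar y))
     = (fun y => 1 *: g (ustar y)).
    by move=> z; apply: boolp.funext => y; rewrite ebasis0.
have cs1 : forall m, cc m ^+ 2 + ss m ^+ 2 = 1 by move=> m; exact: cos2Dsin2.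
split.
  have L2l : forall a v w z, inX v -> inX w -> inX z ->
      Dpi2 ustar (fun y => a *: v y + w y) z = a * Dpi2 ustar v z + Dpi2 ustar w z.
    by move=> *; apply: L2'.
  have L3l : forall a v w z, inX v -> inX w -> inX z ->
      Dpi2 ustar z (fun y => a *: v y + w y) = a * Dpi2 ustar z v + Dpi2 ustar z w.
    by move=> *; apply: L3'.
  have QE := quad_expand H0 Hlin L2l L3l.
  rewrite /frak_a /zsum; congr (_ * _); congr (limn _); apply: boolp.funext => N.
  rewrite /symsum; congr (_ + _).
    by rewrite !SA !SQ !e1 !e2.
  apply: eq_big_nat => i /andP[hi _]; case: i hi => // m _.
  rewrite -(Hal (m.+1)%:Z) -!mulrDr; congr (_ * _).
  rewrite addrACA [RHS]addrACA; congr (_ + _).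
    have PA : forall z : R,
      Dpi (transl z ustar) (fun y => (ebasis (m.+1)%:Z y) ^+ 2 *:
            ('d g (transl z ustar y) (g (transl z ustar y))))
      + Dpi (transl z ustar) (fun y => (ebasis (- (m.+1)%:Z) y) ^+ 2 *:
            ('d g (transl z ustar y) (g (transl z ustar y))))
      = Dpi ustar (fun y => 1 ^+ 2 *: ('d g (ustar y) (g (ustar y))))
      + Dpi ustar (fun y => 1 ^+ 2 *: ('d g (ustar y) (g (ustar y)))).
      move=> z; rewrite -[X in X + _ = _]mul1r -L1 //.
      transitivity (1 * Dpi (transl z ustar) (fun y => (ebasis 0 y) ^+ 2 *:
            ('d g (transl z ustar y) (g (transl z ustar y))))
        + Dpi (transl z ustar) (fun y => (ebasis 0 y) ^+ 2 *:
            ('d g (transl z ustar y) (g (transl z ustar y))))).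
        rewrite -L1 //; congr (Dpi _ _); apply: boolp.funext => y.
        by rewrite !scale1r -!scalerDl ebasis_sq ebasis0; congr (_ *: _); rewrite -[RHS]/((1 + 1) * 1) mulr1 -mulr2n.
      by rewrite mul1r SA e1.
    by rewrite !PA.
  rewrite !SQ ek ekN.
  have -> : (fun y => ebasis (m.+1)%:Z (y + 0) *: g (ustar y))
          = (fun y => ebasis (m.+1)%:Z y *: g (ustar y)).
    by apply: boolp.funext => y; rewrite addr0.
  have -> : (fun y => ebasis (- (m.+1)%:Z) (y + 0) *: g (ustar y))
          = (fun y => ebasis (- (m.+1)%:Z) y *: g (ustar y)).
    by apply: boolp.funext => y; rewrite addr0.
  rewrite !QE //.
  set A := Dpi2 ustar _ _; set B := Dpi2 ustar _ _; set C := Dpi2 ustar _ _; set D := Dpi2 ustar _ _.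
  transitivity ((cc m ^+ 2 + ss m ^+ 2) * (A + D)); first ring.
  by rewrite cs1 mul1r.
rewrite /l2norm; congr (limn _); apply: boolp.funext => N.
congr ((Num.sqrt _)%:E); rewrite /symsum; congr (_ + _).
  by rewrite /frak_b !SB !e2.
apply: eq_big_nat => i /andP[hi _]; case: i hi => // m _.
have PB0 : frak_b ustar g alpha Dpi (m.+1)%:Z 0 ^+ 2
         + frak_b ustar g alpha Dpi (- (m.+1)%:Z) 0 ^+ 2
         = alpha (m.+1)%:Z ^+ 2 * (Dpi ustar (fun y => ebasis (m.+1)%:Z y *: g (ustar y)) ^+ 2
             + Dpi ustar (fun y => ebasis (- (m.+1)%:Z) y *: g (ustar y)) ^+ 2).
  rewrite /frak_b !SB -(Hal (m.+1)%:Z).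
  have -> : (fun y => ebasis (m.+1)%:Z (y + 0) *: g (ustar y))
          = (fun y => ebasis (m.+1)%:Z y *: g (ustar y)).
    by apply: boolp.funext => y; rewrite addr0.
  have -> : (fun y => ebasis (- (m.+1)%:Z) (y + 0) *: g (ustar y))
          = (fun y => ebasis (- (m.+1)%:Z) y *: g (ustar y)).
    by apply: boolp.funext => y; rewrite addr0.
  ring.
rewrite PB0 /frak_b !SB ek ekN !Plin // -(Hal (m.+1)%:Z).
set A := Dpi ustar _; set B := Dpi ustar _.
transitivity (alpha (m.+1)%:Z ^+ 2 * ((cc m ^+ 2 + ss m ^+ 2) * (A ^+ 2 + B ^+ 2))).
  ring.
by rewrite cs1 mul1r.
Qed.
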